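(* Consider the mining game with $N\ge2$ miners, costs $0<c_1\le\dots\le c_N$, reward $R>0$ and capacity $\gamma\ge0$, at parameter values where the number $n$ of active miners does not change under small perturbations of the parameters. For an active miner $i$, $$\frac{\partial h_i^*}{\partial\gamma}=\Delta^{(\gamma)}_{i,1}+\Delta^{(\gamma)}_{i,2},\quad \Delta^{(\gamma)}_{i,1}<0,\quad \Delta^{(\gamma)}_{i,2}>0\iff \frac{h_i^*}{H^*}<\frac12,$$ $$\frac{\partial h_i^*}{\partial R}=\Delta^{(R)}_{i,1}+\Delta^{(R)}_{i,2}>0,\quad \Delta^{(R)}_{i,1}>0,\quad \Delta^{(R)}_{i,2}<0\iff \frac{h_i^*}{H^*}<\frac12.$$ Furthermore, the derivatives $\frac{\partial}{\partial\gamma}\frac{h_i^*}{H^*}$ and $\frac{\partial}{\partial R}\frac{h_i^*}{H^*}$ are increasing in $i$ for $1\le i\le n$.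
   Context: Mining game: $N\ge2$ miners with costs-per-hash $0<c_1\le\dots\le c_N$; each miner $i$ chooses $h_i\ge0$, $H=\sum_j h_j$, payoff $\frac{h_i}{H}R-c_ih_i-\frac{\gamma}{2}h_i^2$ if $H>0$ and $0$ if $H=0$, with $R>0$, $\gamma\ge0$. The pure Nash equilibrium $h^*$ is unique; its active miners ($h_i^*>0$) are $1,\dots,n$ for some $2\le n\le N$, and with $c^{(n)}=\sum_{i=1}^nc_i$ one has $H^*=g(c_1,\dots,c_n,\gamma,R):=\frac{\sqrt{(c^{(n)})^2+4(n-1)R\gamma}-c^{(n)}}{2\gamma}$ for $\gamma>0$ (and $(n-1)R/c^{(n)}$ for $\gamma=0$), and $h_i^*=f_i(c_i,\gamma,R,H^* )$ for $i\le n$ where $f_i(c,\gamma,R,x):=x\frac{R-cx}{R+\gamma x^2}$. Derivatives are of these closed forms with $n$ held fixed. Definitions: $\Delta^{(\gamma)}_{i,1}:=\frac{\partial f_i}{\partial\gamma}$ and $\Delta^{(R)}_{i,1}:=\frac{\partial f_i}{\partial R}$ (with the fourth argument $x=H^*$ held fixed), $\Delta^{(\gamma)}_{i,2}:=\frac{\partial f_i}{\partial x}\big|_{x=H^*}\frac{\partial g}{\partial\gamma}$ and $\Delta^{(R)}_{i,2}:=\frac{\partial f_i}{\partial x}\big|_{x=H^*}\frac{\partial g}{\partial R}$. A sequence is increasing if $x_i\le x_{i+1}$ for all $i$. *)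

(* Defs.v *)
From Stdlib Require Import Reals.
From Coquelicot Require Import Coquelicot.
Open Scope R_scope.

(* Miners are indexed 0,...,N-1 (miner i of the paper is index i-1). *)

Fixpoint sumN (f : nat -> R) (k : nat) : R :=
  match k with
  | O => 0
  | S k' => sumN f k' + f k'
  end.

Definition sorted_costs (N : nat) (c : nat -> R) : Prop :=
  0 < c 0%nat /\ forall i : nat, (i + 1 < N)%nat -> c i <= c (i + 1)%nat.

Definition Htot (N : nat) (h : nat -> R) : R := sumN h N.

Definition payoff (N : nat) (c : nat -> R) (gamma Rw : R) (h : nat -> R)
    (i : nat) : R :=
  if Rlt_dec 0 (Htot N h)
  then h i / Htot N h * Rw - c i * h i - gamma / 2 * h i ^ 2
  else 0.

Definition upd (h : nat -> R) (i : nat) (y : R) : nat -> R :=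
  fun j => if Nat.eqb j i then y else h j.

Definition is_NE (N : nat) (c : nat -> R) (gamma Rw : R) (h : nat -> R) : Prop :=
  (forall j : nat, (j < N)%nat -> 0 <= h j) /\
  forall i : nat, (i < N)%nat -> forall y : R, 0 <= y ->
    payoff N c gamma Rw (upd h i y) i <= payoff N c gamma Rw h i.

(* closed form g(c_1..c_n, gamma, R) for H^*; the gamma <> 0 branch is the
   paper's gamma > 0 formula (also used for gamma < 0, so that a two-sided
   derivative in gamma makes sense at gamma = 0; it is the analytic
   continuation of the paper's function). *)
Definition gH (c : nat -> R) (n : nat) (gamma Rw : R) : R :=
  let cn := sumN c n in
  if Req_EM_T gamma 0
  then (INR n - 1) * Rw / cn
  else (sqrt (cn ^ 2 + 4 * (INR n - 1) * Rw * gamma) - cn) / (2 * gamma).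

Definition fh (ci gamma Rw x : R) : R :=
  x * (Rw - ci * x) / (Rw + gamma * x ^ 2).

(* closed form h_i^* as a function of (gamma, R), with n held fixed *)
Definition hstar (c : nat -> R) (n i : nat) (gamma Rw : R) : R :=
  fh (c i) gamma Rw (gH c n gamma Rw).

Definition Dg1 (c : nat -> R) (i : nat) (gamma Rw Hs : R) : R :=
  Derive (fun g' => fh (c i) g' Rw Hs) gamma.
Definition Dg2 (c : nat -> R) (n i : nat) (gamma Rw Hs : R) : R :=
  Derive (fun x => fh (c i) gamma Rw x) Hs *
  Derive (fun g' => gH c n g' Rw) gamma.
Definition DR1 (c : nat -> R) (i : nat) (gamma Rw Hs : R) : R :=
  Derive (fun r' => fh (c i) gamma r' Hs) Rw.
Definition DR2 (c : nat -> R) (n i : nat) (gamma Rw Hs : R) : R :=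
  Derive (fun x => fh (c i) gamma Rw x) Hs *
  Derive (fun r' => gH c n gamma r') Rw.

(* Main.v *)
Require Import Defs.
From Stdlib Require Import Reals Lra Lia Psatz.
From Coquelicot Require Import Coquelicot.
Open Scope R_scope.

Lemma sumN_upd_ge (h : nat -> R) i y k : (k <= i)%nat -> sumN (upd h i y) k = sumN h k.
Proof.
  induction k as [|k IH]; intros Hk; simpl; [reflexivity|].
  rewrite IH by lia. unfold upd. destruct (Nat.eqb k i) eqn:E.
  - apply Nat.eqb_eq in E. lia.
  - reflexivity.
Qed.

Lemma sumN_upd (h : nat -> R) i y k : (i < k)%nat -> sumN (upd h i y) k = sumN h k - h i + y.
Proof.
  induction k as [|k IH]; intros Hk; [lia|]. simpl.
  destruct (Nat.eq_dec i k) as [->|Hne].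
  - rewrite sumN_upd_ge by lia. unfold upd. rewrite Nat.eqb_refl. ring.
  - rewrite IH by lia. unfold upd. destruct (Nat.eqb k i) eqn:E.
    + apply Nat.eqb_eq in E. lia.
    + ring.
Qed.

Lemma sumN_ge (f : nat -> R) k j : (forall i, (i < k)%nat -> 0 <= f i) -> (j < k)%nat -> f j <= sumN f k.
Proof.
  induction k as [|k IH]; intros Hf Hj; [lia|]. simpl.
  assert (0 <= sumN f k).
  { clear IH Hj. induction k; simpl; [lra|].
    assert (0 <= f k) by (apply Hf; lia). assert (0 <= sumN f k) by (apply IHk; intros; apply Hf; lia). lra. }
  destruct (Nat.eq_dec j k) as [->|Hne].
  - lra.
  - assert (f j <= sumN f k) by (apply IH; [intros; apply Hf; lia| lia]).
    assert (0 <= f k) by (apply Hf; lia). lra.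
Qed.

Lemma sumN_pos (f : nat -> R) k : (forall i, (i < k)%nat -> 0 < f i) -> (1 <= k)%nat -> 0 < sumN f k.
Proof.
  intros Hf Hk. apply Rlt_le_trans with (f 0%nat). apply Hf; lia.
  apply sumN_ge; [intros; left; apply Hf; lia| lia].
Qed.

Lemma sumN_tail (h : nat -> R) n d : (forall i, (n <= i < n + d)%nat -> h i = 0) -> sumN h (n + d) = sumN h n.
Proof.
  induction d as [|d IH]; intros Hz. rewrite Nat.add_0_r; reflexivity.
  rewrite Nat.add_succ_r. simpl. rewrite IH by (intros; apply Hz; lia).
  rewrite (Hz (n + d)%nat) by lia. ring.
Qed.

Lemma sumN_lin (h c : nat -> R) K A B n : (forall i, (i < n)%nat -> h i * K = A - c i * B) ->
  sumN h n * K = INR n * A - sumN c n * B.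
Proof.
  induction n as [|n IH]; intros Hf; cbn [sumN]. simpl; ring.
  rewrite S_INR. rewrite Rmult_plus_distr_r, IH by (intros; apply Hf; lia).
  rewrite Hf by lia. ring.
Qed.

Lemma costs_pos N c : sorted_costs N c -> forall i, (i < N)%nat -> 0 < c i.
Proof.
  intros [H0 Hs]. induction i; intros Hi. exact H0.
  assert (c i <= c (i+1)%nat) by (apply Hs; lia). replace (S i) with (i+1)%nat by lia.
  assert (0 < c i) by (apply IHi; lia). lra.
Qed.

Lemma foc N c gamma Rw h i : is_NE N c gamma Rw h -> (i < N)%nat -> 0 < h i ->
  0 < Htot N h - h i ->
  Rw * (Htot N h - h i) / (Htot N h)^2 = c i + gamma * h i.
Proof.
  intros [Hnn HNE] Hi Hpos HS.
  set (S := Htot N h - h i).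
  assert (HH : Htot N h = h i + S) by (unfold S; ring).
  assert (HS' : 0 < S) by exact HS. clearbody S.
  set (f := fun y => y / (y + S) * Rw - c i * y - gamma / 2 * y ^ 2).
  assert (Hd : is_derive f (h i) (Rw * S / (h i + S)^2 - c i - gamma * h i)).
  { unfold f. auto_derive. lra. field. lra. }
  apply is_derive_Reals in Hd.
  assert (Hm := deriv_maximum f 0 (2 * h i) (h i) (exist _ _ Hd) Hpos ltac:(lra)).
  rewrite (derive_pt_eq_0 _ _ _ _ Hd) in Hm.
  rewrite HH. assert (0 < h i + S) by lra.
  cut (Rw * S / (h i + S) ^ 2 - c i - gamma * h i = 0). intros E. lra.
  apply Hm. intros y Hy1 Hy2.
  assert (E1 : forall y, 0 <= y -> payoff N c gamma Rw (upd h i y) i = f y).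
  { intros z Hz. unfold payoff, Htot. rewrite sumN_upd by exact Hi. fold (Htot N h).
    unfold upd at 1 2 3. rewrite Nat.eqb_refl.
    rewrite HH. replace (h i + S - h i + z) with (z + S) by ring.
    destruct (Rlt_dec 0 (z + S)); [|lra].
    unfold f. reflexivity. }
  rewrite <- E1 by lra.
  replace (f (h i)) with (payoff N c gamma Rw h i).
  apply HNE; [exact Hi| lra].
  unfold payoff. destruct (Rlt_dec 0 (Htot N h)); [|lra]. unfold f. rewrite HH. ring.
Qed.
Definition Gf (b C g r : R) := 2*b*r/(sqrt(C^2+4*b*r*g)+C).

Lemma gH_Gf c n g r : 0 < sumN c n -> 0 <= sumN c n ^2 + 4*(INR n - 1)*r*g ->
  gH c n g r = Gf (INR n - 1) (sumN c n) g r.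
Proof.
  intros HC Hq. unfold gH, Gf. set (C := sumN c n) in *. set (b := INR n - 1) in *.
  assert (Hs := sqrt_pos (C ^ 2 + 4 * b * r * g)).
  assert (Hs2 := sqrt_sqrt (C ^ 2 + 4 * b * r * g) Hq).
  destruct (Req_EM_T g 0) as [->|Hg].
  - replace (C ^ 2 + 4 * b * r * 0) with (C^2) by ring. rewrite sqrt_pow2 by lra. field. lra.
  - set (s := sqrt (C ^ 2 + 4 * b * r * g)) in *. field_simplify_eq; [|lra].
    nra.
Qed.

Lemma equil N n c gamma Rw h
  (Hn2 : (2 <= n)%nat) (HnN : (n <= N)%nat)
  (Hc : sorted_costs N c) (HR : 0 < Rw) (Hgam : 0 <= gamma)
  (HNE : is_NE N c gamma Rw h)
  (Hact : forall i : nat, (i < N)%nat -> (0 < h i <-> (i < n)%nat)) :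
  0 < Htot N h /\ 0 < sumN c n /\
  (forall i, (i < n)%nat -> 0 < h i /\ h i = fh (c i) gamma Rw (Htot N h) /\ c i * Htot N h < Rw) /\
  gamma * (Htot N h)^2 + sumN c n * Htot N h = (INR n - 1) * Rw /\
  Htot N h = gH c n gamma Rw.
Proof.
  assert (Hcp := costs_pos N c Hc).
  assert (HC : 0 < sumN c n) by (apply sumN_pos; [intros; apply Hcp; lia| lia]).
  destruct HNE as [Hnn HNE'].
  assert (Hpos : forall i, (i < n)%nat -> 0 < h i) by (intros; apply Hact; lia).
  assert (HHp : 0 < Htot N h).
  { apply Rlt_le_trans with (h 0%nat). apply Hpos; lia. apply sumN_ge; [exact Hnn| lia]. }
  assert (HSp : forall i, (i < n)%nat -> 0 < Htot N h - h i).
  { intros i Hi. assert (E := sumN_upd h i 0 N ltac:(lia)).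
    set (j := if Nat.eqb i 0 then 1%nat else 0%nat).
    assert (Hj : (j < n)%nat /\ j <> i) by (unfold j; destruct (Nat.eqb i 0) eqn:Ei;
       [apply Nat.eqb_eq in Ei | apply Nat.eqb_neq in Ei]; lia).
    assert (upd h i 0 j <= sumN (upd h i 0) N).
    { apply sumN_ge; [|lia]. intros k Hk. unfold upd. destruct (Nat.eqb k i); [lra| apply Hnn; lia]. }
    unfold upd at 1 in H. replace (Nat.eqb j i) with false in H by (symmetry; apply Nat.eqb_neq; lia).
    assert (0 < h j) by (apply Hpos; lia). unfold Htot. lra. }
  set (H := Htot N h) in *.
  assert (Hfoc : forall i, (i < n)%nat -> h i * (Rw + gamma * H^2) = H * Rw - c i * H^2).
  { intros i Hi. assert (E := foc N c gamma Rw h i (conj Hnn HNE') ltac:(lia) (Hpos i Hi) (HSp i Hi)).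
    fold H in E. assert (0 < H^2) by nra.
    apply (Rmult_eq_compat_r (H^2)) in E. unfold Rdiv in E. rewrite Rmult_assoc, Rinv_l in E by lra.
    nra. }
  assert (Hfh : forall i, (i < n)%nat -> h i = fh (c i) gamma Rw H).
  { intros i Hi. unfold fh. assert (0 < Rw + gamma * H^2) by nra. apply (Rmult_eq_reg_r (Rw + gamma * H ^ 2)); [|lra].
    rewrite Hfoc by exact Hi. field. lra. }
  assert (Hsum : H = sumN h n).
  { unfold H, Htot. replace N with (n + (N - n))%nat by lia. apply sumN_tail.
    intros i Hi. assert (0 <= h i) by (apply Hnn; lia). destruct (Rle_lt_or_eq_dec _ _ H0) as [Hl|He]; [|lra].
    apply Hact in Hl; lia. }
  assert (Hq : gamma * H^2 + sumN c n * H = (INR n - 1) * Rw).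
  { assert (E := sumN_lin h c (Rw + gamma * H^2) (H * Rw) (H^2) n Hfoc). rewrite <- Hsum in E.
    apply (Rmult_eq_reg_l H); [|lra]. nra. }
  split; [exact HHp|]. split; [exact HC|]. split; [|split; [exact Hq|]].
  - intros i Hi. split; [apply Hpos; exact Hi|]. split; [apply Hfh; exact Hi|]. assert (Hp := Hpos i Hi). rewrite Hfh in Hp by exact Hi. unfold fh in Hp.
    assert (0 < Rw + gamma * H^2) by nra.
    apply Rmult_lt_compat_r with (r := (Rw + gamma * H ^ 2)) in Hp; [|lra].
    unfold Rdiv in Hp. rewrite Rmult_assoc, Rinv_l, Rmult_0_l in Hp by lra. nra.
  - assert (Hn1 : 1 <= INR n) by (apply (le_INR 1); lia).
    assert (0 <= (INR n - 1)*Rw*gamma) by (apply Rmult_le_pos; [apply Rmult_le_pos|]; lra).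
    rewrite gH_Gf; [| exact HC| nra]. unfold Gf.
    replace (sumN c n ^ 2 + 4 * (INR n - 1) * Rw * gamma) with ((2*gamma*H + sumN c n)^2) by nra.
    rewrite sqrt_pow2 by nra. field_simplify_eq; [|nra]. nra.
Qed.

Definition dfg ci g r x := - x*(r - ci*x)*x^2/(r+g*x^2)^2.
Definition dfx ci g r x := r*(r - 2*ci*x - g*x^2)/(r+g*x^2)^2.
Definition dfr ci g r x := x^2*(g*x + ci)/(r+g*x^2)^2.
Definition dqg ci g r x x' := ((-r*x^2 - 2*r*g*x*x') + ci*(x^3 - r*x' + g*x^2*x'))/(r+g*x^2)^2.
Definition dqr ci g r x x' := ((g*x^2 - 2*r*g*x*x') + ci*(x - r*x' + g*x^2*x'))/(r+g*x^2)^2.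

Lemma d_fg ci g r x : r + g*x^2 <> 0 -> is_derive (fun g' => fh ci g' r x) g (dfg ci g r x).
Proof. intros. unfold fh, dfg. auto_derive. auto. field. auto. Qed.
Lemma d_fx ci g r x : r + g*x^2 <> 0 -> is_derive (fun x' => fh ci g r x') x (dfx ci g r x).
Proof. intros. unfold fh, dfx. auto_derive. auto. field. auto. Qed.
Lemma d_fr ci g r x : r + g*x^2 <> 0 -> is_derive (fun r' => fh ci g r' x) r (dfr ci g r x).
Proof. intros. unfold fh, dfr. auto_derive. auto. field. auto. Qed.

Lemma chain_g (G : R -> R) ci r g G' : is_derive G g G' -> r + g*(G g)^2 <> 0 ->
  is_derive (fun g' => fh ci g' r (G g')) g (dfg ci g r (G g) + dfx ci g r (G g) * G').
Proof. intros HG Hd. unfold fh, dfg, dfx. auto_derive.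
  - repeat split; try (exists G'; exact HG). intro E; apply Hd; rewrite <- E; ring.
  - replace (Derive (fun x => G x) g) with G' by (symmetry; apply is_derive_unique; exact HG).
    field. exact Hd.
Qed.

Lemma chain_r (G : R -> R) ci r g G' : is_derive G r G' -> r + g*(G r)^2 <> 0 ->
  is_derive (fun r' => fh ci g r' (G r')) r (dfr ci g r (G r) + dfx ci g r (G r) * G').
Proof. intros HG Hd. unfold fh, dfr, dfx. auto_derive.
  - repeat split; try (exists G'; exact HG). intro E; apply Hd; rewrite <- E; ring.
  - replace (Derive (fun x => G x) r) with G' by (symmetry; apply is_derive_unique; exact HG).
    field. exact Hd.
Qed.

Lemma chain_qg (G : R -> R) ci r g G' : is_derive G g G' -> r + g*(G g)^2 <> 0 -> G g <> 0 ->
  is_derive (fun g' => fh ci g' r (G g') / G g') g (dqg ci g r (G g) G').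
Proof. intros HG Hd HG0. unfold fh, dqg. auto_derive.
  - repeat split; try (exists G'; exact HG); [intro E; apply Hd; rewrite <- E; ring| exact HG0].
  - replace (Derive (fun x => G x) g) with G' by (symmetry; apply is_derive_unique; exact HG).
    field. auto.
Qed.

Lemma chain_qr (G : R -> R) ci r g G' : is_derive G r G' -> r + g*(G r)^2 <> 0 -> G r <> 0 ->
  is_derive (fun r' => fh ci g r' (G r') / G r') r (dqr ci g r (G r) G').
Proof. intros HG Hd HG0. unfold fh, dqr. auto_derive.
  - repeat split; try (exists G'; exact HG); [intro E; apply Hd; rewrite <- E; ring| exact HG0].
  - replace (Derive (fun x => G x) r) with G' by (symmetry; apply is_derive_unique; exact HG).
    field. auto.
Qed.

Lemma d_Gg b C g r : 0 < C^2+4*b*r*g -> 0 < C ->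
  is_derive (fun g' => Gf b C g' r) g (-(Gf b C g r)^2 / sqrt(C^2+4*b*r*g)).
Proof.
  intros Hq HC. assert (Hs := sqrt_lt_R0 _ Hq). unfold Gf. auto_derive; replace (C * (C * 1)) with (C ^ 2) by ring.
  - split; [exact Hq|]. split; [|exact I]. lra.
  - set (s := sqrt (C ^ 2 + 4 * b * r * g)) in *. field; repeat split; lra.
Qed.

Lemma d_Gr b C g r : 0 < C^2+4*b*r*g -> 0 < C ->
  is_derive (fun r' => Gf b C g r') r (b / sqrt(C^2+4*b*r*g)).
Proof.
  intros Hq HC. assert (Hs := sqrt_lt_R0 _ Hq). assert (Hs2 := sqrt_sqrt _ (Rlt_le _ _ Hq)). unfold Gf. auto_derive; replace (C * (C * 1)) with (C ^ 2) by ring.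
  - split; [exact Hq|]. split; [|exact I]. lra.
  - set (s := sqrt (C ^ 2 + 4 * b * r * g)) in *.
    assert (b*(s*s) = b*(C^2+4*b*r*g)) by (rewrite Hs2; ring).
    field_simplify_eq; [nra|repeat split; lra].
Qed.

Lemma loc_g c n g r : 0 < sumN c n -> 0 < INR n - 1 -> 0 < r -> 0 <= g ->
  locally g (fun g' => Gf (INR n - 1) (sumN c n) g' r = gH c n g' r).
Proof.
  intros HC Hb Hr Hg. set (C := sumN c n) in *. set (b := INR n - 1) in *.
  assert (He : 0 < C^2/(4*b*r)) by (apply Rdiv_lt_0_compat; nra).
  exists (mkposreal _ He). intros y Hy. change (Rabs (y - g) < C^2/(4*b*r)) in Hy.
  apply Rabs_def2 in Hy. symmetry. apply gH_Gf; [exact HC|].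
  assert (C^2 / (4*b*r) * (4*b*r) = C^2) by (field; nra).
  assert (0 < 4*b*r) by nra.
  assert (- (C ^ 2 / (4 * b * r)) < y) by lra.
  apply Rmult_lt_compat_r with (r := 4*b*r) in H1; [|lra]. fold C b. nra.
Qed.

Lemma loc_r c n g r : 0 < sumN c n -> 0 < INR n - 1 -> 0 < r -> 0 <= g ->
  locally r (fun r' => Gf (INR n - 1) (sumN c n) g r' = gH c n g r').
Proof.
  intros HC Hb Hr Hg. set (C := sumN c n) in *. set (b := INR n - 1) in *.
  exists (mkposreal _ Hr). intros y Hy. change (Rabs (y - r) < r) in Hy.
  apply Rabs_def2 in Hy. symmetry. apply gH_Gf; [exact HC|].
  assert (0 <= b * y * g) by (apply Rmult_le_pos; [apply Rmult_le_pos|]; lra).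
  fold C b. nra.
Qed.

Lemma signs b C g r x ci : 0 < b -> 0 < C -> 0 < r -> 0 <= g -> 0 < x -> 0 < ci -> ci * x < r ->
  g*x^2 + C*x = b*r ->
  dfg ci g r x < 0 /\
  (0 < dfx ci g r x * (-(x^2)/(2*g*x+C)) <-> fh ci g r x / x < 1/2) /\
  0 < dfr ci g r x + dfx ci g r x * (b/(2*g*x+C)) /\
  0 < dfr ci g r x /\
  (dfx ci g r x * (b/(2*g*x+C)) < 0 <-> fh ci g r x / x < 1/2).
Proof.
  intros Hb HC Hr Hg Hx Hc Hcx Hq.
  assert (HD : 0 < r + g*x^2) by nra.
  assert (HD2 : 0 < (r + g*x^2)^2) by nra.
  assert (Hs : 0 < 2*g*x + C) by nra.
  assert (Hrat : fh ci g r x / x < 1/2 <-> r - 2*ci*x - g*x^2 < 0).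
  { unfold fh. replace (x * (r - ci * x) / (r + g * x ^ 2) / x) with ((r - ci*x) / (r + g*x^2)) by (field; lra).
    split; intros H.
    - apply Rmult_lt_compat_r with (r := r + g*x^2) in H; [|lra].
      unfold Rdiv in H. rewrite Rmult_assoc, Rinv_l in H by lra. lra.
    - apply Rmult_lt_reg_r with (r := r + g*x^2); [lra|]. unfold Rdiv. rewrite Rmult_assoc, Rinv_l by lra. lra. }
  assert (Hdfx : dfx ci g r x < 0 <-> r - 2*ci*x - g*x^2 < 0).
  { unfold dfx. split; intros H.
    - destruct (Rlt_or_le (r - 2 * ci * x - g * x ^ 2) 0) as [H1|H1]; [exact H1|].
      exfalso. assert (0 <= r * (r - 2 * ci * x - g * x ^ 2) / (r + g * x ^ 2) ^ 2).
      { apply Rmult_le_pos; [nra| left; apply Rinv_0_lt_compat; lra]. } lra.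
    - assert (0 < - (r * (r - 2 * ci * x - g * x ^ 2)) / (r + g * x ^ 2) ^ 2) by (apply Rdiv_lt_0_compat; nra).
      unfold Rdiv in *. lra. }
  assert (Hxs : 0 < x^2/(2*g*x+C)) by (apply Rdiv_lt_0_compat; nra).
  assert (Hbs : 0 < b/(2*g*x+C)) by (apply Rdiv_lt_0_compat; nra).
  split; [|split; [|split; [|split]]].
  - assert (0 < x*(r - ci*x)*x^2/(r+g*x^2)^2) by (apply Rdiv_lt_0_compat; [apply Rmult_lt_0_compat; nra| lra]).
    unfold dfg. unfold Rdiv in *. lra.
  - rewrite Hrat, <- Hdfx. replace (- x ^ 2 / (2 * g * x + C)) with (- (x ^ 2 / (2 * g * x + C))) by (field; lra).
    split; intros H; nra.
  - assert (Eb : b = x*(g*x+C)/r).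
    { apply (Rmult_eq_reg_r r); [|lra]. unfold Rdiv. rewrite (Rmult_assoc _ (/ r)), Rinv_l by lra. nra. }
    rewrite Eb.
    replace (dfr ci g r x + dfx ci g r x * (x * (g * x + C) / r / (2 * g * x + C)))
      with (x*(g^2*x^3 + g*x*r + C*(r - ci*x)) / ((r+g*x^2)^2*(2*g*x+C))).
    apply Rdiv_lt_0_compat; [|nra]. apply Rmult_lt_0_compat; [lra|].
    assert (0 <= g^2*x^3) by (apply Rmult_le_pos; nra). assert (0 <= g*x*r) by (apply Rmult_le_pos; nra). nra.
    unfold dfr, dfx. field. lra.
  - unfold dfr. apply Rdiv_lt_0_compat; [apply Rmult_lt_0_compat; nra| nra].
  - rewrite Hrat, <- Hdfx. split; intros H; nra.
Qed.

Lemma mono b C g r x c1 c2 : 0 < b -> 0 < C -> 0 < r -> 0 <= g -> 0 < x -> c1 <= c2 ->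
  g*x^2 + C*x = b*r ->
  dqg c1 g r x (-(x^2)/(2*g*x+C)) <= dqg c2 g r x (-(x^2)/(2*g*x+C)) /\
  dqr c1 g r x (b/(2*g*x+C)) <= dqr c2 g r x (b/(2*g*x+C)).
Proof.
  intros Hb HC Hr Hg Hx Hc Hq.
  assert (HD : 0 < r + g*x^2) by nra.
  assert (Hs : 0 < 2*g*x + C) by nra.
  split.
  - replace (dqg c2 g r x (- x ^ 2 / (2 * g * x + C))) with
      (dqg c1 g r x (- x ^ 2 / (2 * g * x + C)) + (c2 - c1) * (x^2*(g*x^2+C*x+r)) / ((2*g*x+C) * (r+g*x^2)^2)).
    2:{ unfold dqg. field; repeat split; nra. }
    assert (0 <= (c2 - c1) * (x^2*(g*x^2+C*x+r)) / ((2*g*x+C) * (r+g*x^2)^2)).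
    { apply Rmult_le_pos; [apply Rmult_le_pos; [lra|]|left; apply Rinv_0_lt_compat; repeat apply Rmult_lt_0_compat; nra].
      assert (0 <= g*x^2) by (apply Rmult_le_pos; nra). apply Rmult_le_pos; nra. }
    lra.
  - assert (Eb : b = x*(g*x+C)/r).
    { apply (Rmult_eq_reg_r r); [|lra]. unfold Rdiv. rewrite (Rmult_assoc _ (/ r)), Rinv_l by lra. nra. }
    rewrite Eb.
    replace (dqr c2 g r x (x * (g * x + C) / r / (2 * g * x + C))) with
      (dqr c1 g r x (x * (g * x + C) / r / (2 * g * x + C)) + (c2 - c1) * (x*(r*g*x + g^2*x^3 + C*g*x^2)) / (r*(2*g*x+C) * (r+g*x^2)^2)).
    2:{ unfold dqr. field; repeat split; nra. }
    assert (0 <= (c2 - c1) * (x*(r*g*x + g^2*x^3 + C*g*x^2)) / (r*(2*g*x+C) * (r+g*x^2)^2)).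
    { apply Rmult_le_pos; [apply Rmult_le_pos; [lra|]|left; apply Rinv_0_lt_compat; repeat apply Rmult_lt_0_compat; nra].
      assert (0 <= g*x) by nra. assert (0 <= g^2*x^3) by (apply Rmult_le_pos; nra).
      assert (0 <= r*g*x) by (apply Rmult_le_pos; nra). assert (0 <= C*g*x^2) by (apply Rmult_le_pos; nra).
      apply Rmult_le_pos; nra. }
    lra.
Qed.

Theorem proposition4p6
  (N n : nat) (c : nat -> R) (gamma Rw : R) (h : nat -> R)
  (HN : (2 <= N)%nat) (Hn2 : (2 <= n)%nat) (HnN : (n <= N)%nat)
  (Hc : sorted_costs N c) (HR : 0 < Rw) (Hgam : 0 <= gamma)
  (HNE : is_NE N c gamma Rw h)
  (Hact : forall i : nat, (i < N)%nat -> (0 < h i <-> (i < n)%nat))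
  (Hstable : exists eps : R, 0 < eps /\
     forall (c' : nat -> R) (gamma' Rw' : R) (h' : nat -> R),
       (forall j : nat, (j < N)%nat -> Rabs (c' j - c j) < eps) ->
       Rabs (gamma' - gamma) < eps -> Rabs (Rw' - Rw) < eps ->
       sorted_costs N c' -> 0 <= gamma' -> 0 < Rw' ->
       is_NE N c' gamma' Rw' h' ->
       forall i : nat, (i < N)%nat -> (0 < h' i <-> (i < n)%nat)) :
  (forall i : nat, (i < n)%nat ->
     let Hs := Htot N h in
     is_derive (fun g' => hstar c n i g' Rw) gamma
       (Dg1 c i gamma Rw Hs + Dg2 c n i gamma Rw Hs) /\
     Dg1 c i gamma Rw Hs < 0 /\
     (0 < Dg2 c n i gamma Rw Hs <-> h i / Hs < 1 / 2) /\
     is_derive (fun r' => hstar c n i gamma r') Rw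
       (DR1 c i gamma Rw Hs + DR2 c n i gamma Rw Hs) /\
     0 < DR1 c i gamma Rw Hs + DR2 c n i gamma Rw Hs /\
     0 < DR1 c i gamma Rw Hs /\
     (DR2 c n i gamma Rw Hs < 0 <-> h i / Hs < 1 / 2)) /\
  (exists dg dR : nat -> R,
     (forall i : nat, (i < n)%nat ->
        is_derive (fun g' => hstar c n i g' Rw / gH c n g' Rw) gamma (dg i) /\
        is_derive (fun r' => hstar c n i gamma r' / gH c n gamma r') Rw (dR i)) /\
     (forall i : nat, (i + 1 < n)%nat -> dg i <= dg (i + 1)%nat /\ dR i <= dR (i + 1)%nat)).
Proof.
  clear Hstable.
  destruct (equil N n c gamma Rw h Hn2 HnN Hc HR Hgam HNE Hact) as [HHp [HC [Hact' [Hq HgH]]]].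
  assert (Hcp := costs_pos N c Hc).
  assert (Hb : 0 < INR n - 1) by (assert (2 <= INR n) by (apply (le_INR 2); lia); lra).
  set (b := INR n - 1) in *. set (C := sumN c n) in *. set (x := Htot N h) in *.
  assert (Hqpos : 0 < C^2 + 4*b*Rw*gamma) by (assert (0 <= b*Rw*gamma) by (apply Rmult_le_pos; [apply Rmult_le_pos|]; lra); nra).
  assert (Hsq : sqrt (C^2 + 4*b*Rw*gamma) = 2*gamma*x + C).
  { replace (C ^ 2 + 4 * b * Rw * gamma) with ((2*gamma*x + C)^2) by nra. apply sqrt_pow2. nra. }
  assert (HGf : Gf b C gamma Rw = x).
  { transitivity (gH c n gamma Rw); [symmetry; apply gH_Gf; [exact HC| left; exact Hqpos] | symmetry; exact HgH]. }
  assert (DGg : is_derive (fun g' => gH c n g' Rw) gamma (-(x^2)/(2*gamma*x+C))).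
  { apply is_derive_ext_loc with (f := fun g' => Gf b C g' Rw). apply loc_g; assumption.
    rewrite <- HGf at 1. rewrite <- Hsq. apply d_Gg; assumption. }
  assert (DGr : is_derive (fun r' => gH c n gamma r') Rw (b/(2*gamma*x+C))).
  { apply is_derive_ext_loc with (f := fun r' => Gf b C gamma r'). apply loc_r; assumption.
    rewrite <- Hsq. apply d_Gr; assumption. }
  assert (HD : 0 < Rw + gamma * x^2) by nra.
  assert (HD' : Rw + gamma * x^2 <> 0) by lra.
  assert (HgH' : gH c n gamma Rw = x) by (symmetry; exact HgH).
  split.
  - intros i Hi Hs. unfold Hs; clear Hs.
    destruct (Hact' i Hi) as [Hhp [Hfh Hcx]].
    assert (Hci : 0 < c i) by (apply Hcp; lia).
    assert (E1 : Dg1 c i gamma Rw x = dfg (c i) gamma Rw x) by (apply is_derive_unique, d_fg; exact HD').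
    assert (E2 : Dg2 c n i gamma Rw x = dfx (c i) gamma Rw x * (-(x^2)/(2*gamma*x+C))).
    { unfold Dg2. f_equal; apply is_derive_unique; [apply d_fx; exact HD' | exact DGg]. }
    assert (E3 : DR1 c i gamma Rw x = dfr (c i) gamma Rw x) by (apply is_derive_unique, d_fr; exact HD').
    assert (E4 : DR2 c n i gamma Rw x = dfx (c i) gamma Rw x * (b/(2*gamma*x+C))).
    { unfold DR2. f_equal; apply is_derive_unique; [apply d_fx; exact HD' | exact DGr]. }
    rewrite E1, E2, E3, E4, Hfh.
    destruct (signs b C gamma Rw x (c i) Hb HC HR Hgam HHp Hci Hcx Hq) as [S1 [S2 [S3 [S4 S5]]]].
    split; [|split; [exact S1|split; [exact S2|split; [|split; [exact S3|split; [exact S4|exact S5]]]]]].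
    + assert (Hd := chain_g (fun g' => gH c n g' Rw) (c i) Rw gamma _ DGg).
      cbv beta in Hd. rewrite HgH' in Hd. unfold hstar. exact (Hd HD').
    + assert (Hd := chain_r (fun r' => gH c n gamma r') (c i) Rw gamma _ DGr).
      cbv beta in Hd. rewrite HgH' in Hd. unfold hstar. exact (Hd HD').
  - exists (fun i => dqg (c i) gamma Rw x (-(x^2)/(2*gamma*x+C))).
    exists (fun i => dqr (c i) gamma Rw x (b/(2*gamma*x+C))).
    split.
    + intros i Hi. split.
      * assert (Hd := chain_qg (fun g' => gH c n g' Rw) (c i) Rw gamma _ DGg).
        cbv beta in Hd. rewrite HgH' in Hd. unfold hstar. apply Hd; lra.
      * assert (Hd := chain_qr (fun r' => gH c n gamma r') (c i) Rw gamma _ DGr).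
        cbv beta in Hd. rewrite HgH' in Hd. unfold hstar. apply Hd; lra.
    + intros i Hi. apply (mono b C gamma Rw x); try assumption.
      apply Hc. lia.
Qed.
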